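(* Let $\delta > 0$ and $P > 0$, and let $\mathcal{X}$ be a $\delta$-spaced set of real numbers contained in $[-P, P]$. Let $I$ be a finite set, $\{y_i\}_{i \in I}$ a family of integers and $\{a_i\}_{i \in I}$ a family of complex numbers, and let $T \geq 0$ be a real number with $|y_i| \leq T$ for all $i \in I$. Put $f(t) = \sum_{i \in I} a_i e(t y_i)$ and $f^*(t) = \sum_{i \in I} |a_i| e(t y_i)$. Then \[ \Big| \sum_{x \in \mathcal{X}} f(x) \Big| \leq \pi \left( \mathrm{Card}(\mathcal{X})\, T + \frac{\mathrm{Card}(\mathcal{X})}{\delta} \right)^{1/2} (P+2)^{1/2} \left( \int_0^1 |f^*(t)|^2 \, dt \right)^{1/2}. \]
   Context: $e(z) = e^{2\pi i z}$. For $\delta > 0$, a $\delta$-spaced set of real numbers is a finite set $\mathcal{X}$ of distinct real numbers containing at least two elements such that $|x - x'| \geq \delta$ whenever $x, x'$ are distinct elements of $\mathcal{X}$. *)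

(* Defs.v *)
From Stdlib Require Import Reals Lra Lia ZArith List.
Import ListNotations.
Open Scope R_scope.

(* Complex numbers as (real part, imaginary part). *)
Definition Cx : Type := (R * R)%type.
Definition C0 : Cx := (0, 0).
Definition RtoC (r : R) : Cx := (r, 0).
Definition Cplus (z w : Cx) : Cx := (fst z + fst w, snd z + snd w).
Definition Cmult (z w : Cx) : Cx :=
  (fst z * fst w - snd z * snd w, fst z * snd w + snd z * fst w).
Definition Cmod (z : Cx) : R := sqrt (fst z ^ 2 + snd z ^ 2).

Fixpoint Csum_nat (n : nat) (F : nat -> Cx) : Cx :=
  match n with
  | O => C0
  | S m => Cplus (Csum_nat m F) (F m)
  end.
Fixpoint Csum_list (l : list R) (F : R -> Cx) : Cx :=
  match l with
  | [] => C0
  | x :: l' => Cplus (F x) (Csum_list l' F)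
  end.

Definition e (z : R) : Cx := (cos (2 * PI * z), sin (2 * PI * z)).

(* The finite index set I is {0, ..., n-1}. *)
Definition fsum (n : nat) (a : nat -> Cx) (y : nat -> Z) (t : R) : Cx :=
  Csum_nat n (fun i => Cmult (a i) (e (t * IZR (y i)))).
Definition fstar (n : nat) (a : nat -> Cx) (y : nat -> Z) (t : R) : Cx :=
  Csum_nat n (fun i => Cmult (RtoC (Cmod (a i))) (e (t * IZR (y i)))).

Definition delta_spaced (delta : R) (X : list R) : Prop :=
  NoDup X /\ (2 <= length X)%nat /\
  (forall x x', In x X -> In x' X -> x <> x' -> delta <= Rabs (x - x')).

(* Main.v *)
Require Import Defs.
From Stdlib Require Import Reals ZArith List.
From Stdlib Require Import Lra Lia Psatz Classical FunctionalExtensionality Machin.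
Import ListNotations.
Open Scope R_scope.


Fixpoint rsum (n : nat) (f : nat -> R) : R :=
  match n with O => 0 | S m => rsum m f + f m end.
Fixpoint lsum (l : list R) (f : R -> R) : R :=
  match l with [] => 0 | x :: l' => f x + lsum l' f end.

Lemma rsum_ext n f g : (forall i, (i < n)%nat -> f i = g i) -> rsum n f = rsum n g.
Proof. induction n; simpl; intros; auto. rewrite IHn by (intros; apply H; lia). rewrite H by lia; auto. Qed.
Lemma rsum_plus n f g : rsum n (fun i => f i + g i) = rsum n f + rsum n g.
Proof. induction n; simpl; try rewrite IHn; ring. Qed.
Lemma rsum_scal n c f : rsum n (fun i => c * f i) = c * rsum n f.
Proof. induction n; simpl; try rewrite IHn; ring. Qed.
Lemma rsum_scal_r n c f : rsum n (fun i => f i * c) = rsum n f * c.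
Proof. induction n; simpl; try rewrite IHn; ring. Qed.
Lemma rsum_le n f g : (forall i, (i < n)%nat -> f i <= g i) -> rsum n f <= rsum n g.
Proof. induction n; simpl; intros; try lra. apply Rplus_le_compat; [apply IHn; intros; apply H; lia| apply H; lia]. Qed.
Lemma rsum_nonneg n f : (forall i, (i < n)%nat -> 0 <= f i) -> 0 <= rsum n f.
Proof. intros. replace 0 with (rsum n (fun _ => 0)). apply rsum_le; auto. induction n; simpl; auto. rewrite IHn; [ring|intros; apply H; lia]. Qed.
Lemma rsum_const n c : rsum n (fun _ => c) = INR n * c.
Proof. induction n; simpl rsum; [simpl; ring|]. rewrite IHn, S_INR; ring. Qed.
Lemma rsum_swap n m (f : nat -> nat -> R) :
  rsum n (fun i => rsum m (fun j => f i j)) = rsum m (fun j => rsum n (fun i => f i j)).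
Proof. induction n; simpl. { induction m; simpl; auto; rewrite <- IHm; ring. }
  rewrite IHn, <- rsum_plus; auto. Qed.
Lemma rsum_shift n f : rsum (S n) f = f O + rsum n (fun i => f (S i)).
Proof. induction n; simpl in *; [ring|]. rewrite IHn; ring. Qed.
Lemma rsum_mono_n n m f : (n <= m)%nat -> (forall i, 0 <= f i) -> rsum n f <= rsum m f.
Proof. intros Hle Hf. induction Hle; [lra|]. simpl. specialize (Hf m). lra. Qed.

Lemma rsum_single n j0 f : (j0 < n)%nat -> (forall j, (j < n)%nat -> j <> j0 -> f j = 0) -> rsum n f = f j0.
Proof. induction n; intros; [lia|]. simpl. destruct (Nat.eq_dec j0 n).
  - subst. rewrite (rsum_ext n f (fun _ => 0)). rewrite rsum_const; ring. intros; apply H0; lia.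
  - rewrite IHn; [rewrite (H0 n); [ring|lia|lia]|lia|intros; apply H0; lia]. Qed.

Lemma lsum_ext l f g : (forall x, In x l -> f x = g x) -> lsum l f = lsum l g.
Proof. induction l; simpl; intros; auto. rewrite H, IHl; auto. Qed.
Lemma lsum_plus l f g : lsum l (fun i => f i + g i) = lsum l f + lsum l g.
Proof. induction l; simpl; try rewrite IHl; ring. Qed.
Lemma lsum_scal l c f : lsum l (fun i => c * f i) = c * lsum l f.
Proof. induction l; simpl; try rewrite IHl; ring. Qed.
Lemma lsum_le l f g : (forall x, In x l -> f x <= g x) -> lsum l f <= lsum l g.
Proof. induction l; simpl; intros; try lra. apply Rplus_le_compat; auto. Qed.
Lemma lsum_const l c : lsum l (fun _ => c) = INR (length l) * c.
Proof. induction l; simpl lsum; [simpl; ring|]. rewrite IHl; simpl length; rewrite S_INR; ring. Qed.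
Lemma lsum_app l1 l2 f : lsum (l1 ++ l2) f = lsum l1 f + lsum l2 f.
Proof. induction l1; simpl; try rewrite IHl1; ring. Qed.
Lemma lsum_rsum_swap l n (f : R -> nat -> R) :
  lsum l (fun x => rsum n (fun i => f x i)) = rsum n (fun i => lsum l (fun x => f x i)).
Proof. induction l; simpl. { induction n; simpl; auto; rewrite <- IHn; ring. }
  rewrite IHl, <- rsum_plus; auto. Qed.
Lemma lsum_swap l1 l2 (f : R -> R -> R) :
  lsum l1 (fun x => lsum l2 (fun y => f x y)) = lsum l2 (fun y => lsum l1 (fun x => f x y)).
Proof. induction l1; simpl. { induction l2; simpl; auto; rewrite <- IHl2; ring. }
  rewrite IHl1, <- lsum_plus; auto. Qed.
Lemma lsum_filter l f (p : R -> bool) :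
  lsum l f = lsum (filter p l) f + lsum (filter (fun x => negb (p x)) l) f.
Proof. induction l; simpl; [ring|]. destruct (p a); simpl; rewrite IHl; ring. Qed.
Lemma lsum_map l f g : lsum (map g l) f = lsum l (fun x => f (g x)).
Proof. induction l; simpl; auto. rewrite IHl; auto. Qed.
Lemma lsum_nonneg l f : (forall x, In x l -> 0 <= f x) -> 0 <= lsum l f.
Proof. induction l; simpl; intros H; [lra|]. assert (0 <= f a) by (apply H; auto). assert (0 <= lsum l f) by (apply IHl; intros; apply H; auto). lra. Qed.

Lemma rsum_sq n f : rsum n f * rsum n f = rsum n (fun i => rsum n (fun j => f i * f j)).
Proof. rewrite <- rsum_scal_r. apply rsum_ext; intros. rewrite <- rsum_scal. auto. Qed.
Lemma lsum_scal_r l c f : lsum l (fun i => f i * c) = lsum l f * c.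
Proof. induction l; simpl; try rewrite IHl; ring. Qed.
Lemma lsum_sq l f : lsum l f * lsum l f = lsum l (fun x => lsum l (fun y => f x * f y)).
Proof. rewrite <- lsum_scal_r. apply lsum_ext; intros. rewrite <- lsum_scal. auto. Qed.

Lemma rsum_S n f : rsum (S n) f = rsum n f + f n.
Proof. reflexivity. Qed.
Lemma CS n u v : rsum n (fun i => u i * v i) ^ 2 <= rsum n (fun i => u i ^ 2) * rsum n (fun i => v i ^ 2).
Proof. induction n; rewrite ?rsum_S; [simpl; lra|].
  set (A := rsum n (fun i => u i * v i)) in *. set (B := rsum n (fun i => u i ^ 2)) in *.
  set (C := rsum n (fun i => v i ^ 2)) in *.
  assert (HB: 0 <= B) by (apply rsum_nonneg; intros; nra).
  assert (HC: 0 <= C) by (apply rsum_nonneg; intros; nra).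
  set (x := u n) in *; set (y := v n) in *.
  assert (H1: (B*y^2 + C*x^2)^2 >= 4*A^2*x^2*y^2).
  { assert (h0 := pow2_ge_0 (B*y^2 - C*x^2)).
    assert (h1: A^2*(x^2*y^2) <= B*C*(x^2*y^2)) by (apply Rmult_le_compat_r; [apply Rmult_le_pos; apply pow2_ge_0|exact IHn]). nra. }
  assert (H2: 2*A*x*y <= B*y^2 + C*x^2).
  { assert (HS: 0 <= B*y^2 + C*x^2) by nra.
    destruct (Rle_dec (2*A*x*y) (B*y^2 + C*x^2)) as [h|h]; auto.
    exfalso. apply Rnot_le_lt in h.
    assert ((2*A*x*y - (B*y^2 + C*x^2)) * (2*A*x*y + (B*y^2 + C*x^2)) > 0) by (apply Rmult_lt_0_compat; lra).
    nra. }
  replace ((A + x*y)^2) with (A^2 + 2*A*x*y + x^2*y^2) by ring.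
  replace ((B + x^2)*(C + y^2)) with (B*C + (B*y^2 + C*x^2) + x^2*y^2) by ring.
  lra. Qed.


Lemma fst_Csum_nat n F : fst (Csum_nat n F) = rsum n (fun i => fst (F i)).
Proof. induction n; simpl; auto. rewrite IHn; auto. Qed.
Lemma snd_Csum_nat n F : snd (Csum_nat n F) = rsum n (fun i => snd (F i)).
Proof. induction n; simpl; auto. rewrite IHn; auto. Qed.
Lemma fst_Csum_list l F : fst (Csum_list l F) = lsum l (fun i => fst (F i)).
Proof. induction l; simpl; auto. rewrite IHl; auto. Qed.
Lemma snd_Csum_list l F : snd (Csum_list l F) = lsum l (fun i => snd (F i)).
Proof. induction l; simpl; auto. rewrite IHl; auto. Qed.

Lemma Cmod_nonneg z : 0 <= Cmod z.
Proof. unfold Cmod. apply sqrt_pos. Qed.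
Lemma Cmod_sq z : Cmod z ^ 2 = fst z ^ 2 + snd z ^ 2.
Proof. unfold Cmod. apply pow2_sqrt. nra. Qed.
Lemma Cmod_le z w : fst z ^ 2 + snd z ^ 2 <= fst w ^ 2 + snd w ^ 2 -> Cmod z <= Cmod w.
Proof. intros. unfold Cmod. apply sqrt_le_1_alt. auto. Qed.

Lemma Cmod_triangle z w : Cmod (Cplus z w) <= Cmod z + Cmod w.
Proof.
  destruct z as [a b], w as [c d]. unfold Cplus; simpl.
  assert (Hz := Cmod_nonneg (a,b)). assert (Hw := Cmod_nonneg (c,d)).
  assert (Hz2 := Cmod_sq (a,b)). assert (Hw2 := Cmod_sq (c,d)). cbn [fst snd] in *.
  set (p := Cmod (a,b)) in *. set (q := Cmod (c,d)) in *.
  unfold Cmod; simpl.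
  rewrite <- (sqrt_pow2 (p+q)) by lra. apply sqrt_le_1_alt.
  assert (a*c + b*d <= p*q).
  { destruct (Rle_dec (a*c+b*d) 0). nra.
    assert ((a*c+b*d)^2 <= (p*q)^2).
    { replace ((p*q)^2) with (p^2*q^2) by ring. rewrite Hz2, Hw2.
      assert (0 <= (a*d-b*c)^2) by apply pow2_ge_0. nra. }
    destruct (Rle_dec (a*c+b*d) (p*q)); auto. exfalso.
    assert ((a*c+b*d - p*q)*(a*c+b*d+p*q) > 0) by (apply Rmult_lt_0_compat; nra). nra. }
  nra.
Qed.

Lemma Cmod_mult z w : Cmod (Cmult z w) = Cmod z * Cmod w.
Proof. unfold Cmod. rewrite <- sqrt_mult by nra. f_equal. unfold Cmult; simpl. ring. Qed.

Lemma Cmod_Csum_nat n G : Cmod (Csum_nat n G) <= rsum n (fun i => Cmod (G i)).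
Proof. induction n; simpl. { unfold Cmod, C0; simpl. replace (0*(0*1)+0*(0*1)) with 0 by ring. rewrite sqrt_0; lra. }
  eapply Rle_trans; [apply Cmod_triangle|]. lra. Qed.

Lemma Cx_eq (z w : Cx) : fst z = fst w -> snd z = snd w -> z = w.
Proof. destruct z, w; simpl; intros; subst; auto. Qed.

Lemma lsum_minus l f g : lsum l (fun x => f x - g x) = lsum l f - lsum l g.
Proof. induction l; simpl; try rewrite IHl; ring. Qed.

Definition Sx (X : list R) (k : Z) : Cx := Csum_list X (fun x => e (x * IZR k)).

Lemma step1 X n a y :
  Cmod (Csum_list X (fsum n a y)) <= rsum n (fun i => Cmod (a i) * Cmod (Sx X (y i))).
Proof.
  assert (Csum_list X (fsum n a y) = Csum_nat n (fun i => Cmult (a i) (Sx X (y i)))).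
  { apply Cx_eq.
    - rewrite fst_Csum_list, fst_Csum_nat. unfold fsum.
      rewrite (lsum_ext _ _ (fun x => rsum n (fun i => fst (Cmult (a i) (e (x * IZR (y i))))))).
      2:{ intros; apply fst_Csum_nat. }
      rewrite lsum_rsum_swap. apply rsum_ext; intros. unfold Sx, Cmult; simpl.
      rewrite fst_Csum_list, snd_Csum_list. rewrite <- !lsum_scal.
      rewrite <- lsum_minus. apply lsum_ext; intros. unfold e; simpl. ring.
    - rewrite snd_Csum_list, snd_Csum_nat. unfold fsum.
      rewrite (lsum_ext _ _ (fun x => rsum n (fun i => snd (Cmult (a i) (e (x * IZR (y i))))))).
      2:{ intros; apply snd_Csum_nat. }
      rewrite lsum_rsum_swap. apply rsum_ext; intros. unfold Sx, Cmult; simpl.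
      rewrite fst_Csum_list, snd_Csum_list. rewrite <- !lsum_scal.
      rewrite <- lsum_plus. apply lsum_ext; intros. unfold e; simpl. ring. }
  rewrite H. eapply Rle_trans; [apply Cmod_Csum_nat|]. right. apply rsum_ext; intros. apply Cmod_mult.
Qed.


Definition ind (a b : nat) : R := if Nat.eq_dec a b then 1 else 0.

Lemma rsum_ind n j0 g : (j0 < n)%nat -> rsum n (fun j => ind j0 j * g j) = g j0.
Proof. intros. rewrite (rsum_single n j0). unfold ind; destruct Nat.eq_dec; [ring|congruence]. auto.
  intros; unfold ind; destruct Nat.eq_dec; [congruence|ring]. Qed.

Lemma ind_sym a b : ind a b = ind b a.
Proof. unfold ind; do 2 destruct Nat.eq_dec; auto; congruence. Qed.

Section Group.
Variables (n M : nat) (c : nat -> R) (jdx : nat -> nat).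
Hypothesis Hj : forall i, (i < n)%nat -> (jdx i < M)%nat.
Definition bb j := rsum n (fun i => c i * ind (jdx i) j).

Lemma grouping g : rsum n (fun i => c i * g (jdx i)) = rsum M (fun j => bb j * g j).
Proof. unfold bb. rewrite (rsum_ext M _ (fun j => rsum n (fun i => c i * ind (jdx i) j * g j))).
  2:{ intros. rewrite <- rsum_scal_r; auto. }
  rewrite <- rsum_swap. apply rsum_ext. intros.
  rewrite (rsum_ext M _ (fun j => c i * (ind (jdx i) j * g j))) by (intros; ring).
  rewrite rsum_scal, rsum_ind; auto. Qed.

Lemma Qgroup : rsum M (fun j => bb j ^ 2) =
  rsum n (fun i => rsum n (fun i' => c i * c i' * ind (jdx i) (jdx i'))).
Proof.
  rewrite (rsum_ext M _ (fun j => rsum n (fun i => rsum n (fun i' => c i * ind (jdx i) j * (c i' * ind (jdx i') j))))).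
  2:{ intros. unfold bb. simpl. rewrite Rmult_1_r. apply (rsum_sq n (fun i0 => c i0 * ind (jdx i0) i)). }
  rewrite rsum_swap. apply rsum_ext; intros i Hi. rewrite rsum_swap. apply rsum_ext; intros i' Hi'.
  rewrite (rsum_ext M _ (fun j => ind (jdx i) j * (c i * c i' * ind (jdx i') j))) by (intros; cbv beta; ring).
  rewrite rsum_ind by auto. rewrite ind_sym; auto. Qed.

Lemma bb_zero j : (forall i, (i < n)%nat -> jdx i <> j) -> bb j = 0.
Proof. intros. unfold bb. rewrite (rsum_ext n _ (fun _ => 0)). rewrite rsum_const; ring.
  intros. unfold ind. destruct Nat.eq_dec. exfalso; apply (H i); auto. ring. Qed.
End Group.

Lemma weighted_CS M u v w : (forall j, (j < M)%nat -> 0 < w j) ->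
  rsum M (fun j => u j * v j) ^ 2 <= rsum M (fun j => u j ^ 2 / w j) * rsum M (fun j => w j * v j ^ 2).
Proof.
  intros Hw.
  assert (E1: rsum M (fun j => u j * v j) = rsum M (fun j => (u j / sqrt (w j)) * (sqrt (w j) * v j))).
  { apply rsum_ext; intros. specialize (Hw i H). assert (0 < sqrt (w i)) by (apply sqrt_lt_R0; auto). field. lra. }
  assert (E2: rsum M (fun j => u j ^ 2 / w j) = rsum M (fun j => (u j / sqrt (w j)) ^ 2)).
  { apply rsum_ext; intros. specialize (Hw i H). assert (0 < sqrt (w i)) by (apply sqrt_lt_R0; auto).
    unfold Rdiv. rewrite Rpow_mult_distr, pow_inv, pow2_sqrt; lra. }
  assert (E3: rsum M (fun j => w j * v j ^ 2) = rsum M (fun j => (sqrt (w j) * v j) ^ 2)).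
  { apply rsum_ext; intros. specialize (Hw i H). rewrite Rpow_mult_distr, pow2_sqrt; lra. }
  rewrite E1, E2, E3. apply CS. Qed.


Definition Dk (M : nat) (al : R) := 1 + 2 * rsum M (fun k => cos (INR (S k) * al)).
Definition Fej (N : nat) (al : R) := INR (S N) + 2 * rsum N (fun k => (INR N - INR k) * cos (INR (S k) * al)).

Lemma cos_prod a b : 2 * cos a * cos b = cos (a + b) + cos (a - b).
Proof. rewrite cos_plus, cos_minus. ring. Qed.

Lemma Dk_id M al : Dk M al * (2 - 2 * cos al) = 2 * cos (INR M * al) - 2 * cos (INR (S M) * al).
Proof. induction M.
  - unfold Dk; simpl. replace (0 * al) with 0 by ring. replace (1*al) with al by ring. rewrite cos_0. ring.
  - unfold Dk in *. rewrite rsum_S.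
    replace ((1 + 2 * (rsum M (fun k => cos (INR (S k) * al)) + cos (INR (S M) * al))) * (2 - 2 * cos al))
      with ((1 + 2 * rsum M (fun k => cos (INR (S k) * al))) * (2 - 2 * cos al) + 4 * cos (INR (S M) * al) - 2 * (2 * cos (INR (S M) * al) * cos al)) by ring.
    rewrite IHM, cos_prod.
    replace (INR (S M) * al + al) with (INR (S (S M)) * al) by (rewrite !S_INR; ring).
    replace (INR (S M) * al - al) with (INR M * al) by (rewrite !S_INR; ring). ring.
Qed.

Lemma Fej_rec N al : Fej (S N) al = Fej N al + Dk (S N) al.
Proof. unfold Fej, Dk. rewrite !rsum_S.
  rewrite (rsum_ext N (fun k => (INR (S N) - INR k) * cos (INR (S k) * al))
     (fun k => (INR N - INR k) * cos (INR (S k) * al) + cos (INR (S k) * al))).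
  2:{ intros. rewrite S_INR. ring. }
  rewrite rsum_plus. rewrite !S_INR. ring. Qed.

Lemma Fej_id N al : Fej N al * (2 - 2 * cos al) = 2 - 2 * cos (INR (S N) * al).
Proof. induction N.
  - unfold Fej; simpl. replace (1*al) with al by ring. ring.
  - rewrite Fej_rec. rewrite Rmult_plus_distr_r, IHN, Dk_id. ring. Qed.

Lemma Dk_le M al : Dk M al <= 2 * INR M + 1.
Proof. unfold Dk. assert (rsum M (fun k => cos (INR (S k) * al)) <= rsum M (fun _ => 1)).
  apply rsum_le; intros; apply COS_bound. rewrite rsum_const in H. lra. Qed.

Lemma Fej_le N al : Fej N al <= INR (S N) ^ 2.
Proof. induction N.
  - unfold Fej; simpl. lra.
  - rewrite Fej_rec. assert (h := Dk_le (S N) al). rewrite !S_INR in *. nra. Qed.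

Lemma Fej_le2 N al : Fej N al * (1 - cos al) <= 2.
Proof. assert (h := Fej_id N al). assert (h2 := COS_bound (INR (S N) * al)). lra. Qed.

Lemma rsum_sym N g : rsum (2 * N + 1) (fun j => g (INR j - INR N)) =
   g 0 + rsum N (fun k => g (INR (S k)) + g (- INR (S k))).
Proof. induction N.
  - simpl. replace (0 - 0) with 0 by ring. ring.
  - replace (2 * S N + 1)%nat with (S (S (2 * N + 1))) by lia.
    rewrite rsum_shift, rsum_S.
    rewrite (rsum_ext (2*N+1) (fun i => g (INR (S i) - INR (S N))) (fun j => g (INR j - INR N))).
    2:{ intros. f_equal. rewrite !S_INR. ring. }
    rewrite IHN, rsum_S.
    replace (INR 0 - INR (S N)) with (- INR (S N)) by (simpl; ring).
    replace (INR (S (2 * N + 1)) - INR (S N)) with (INR (S N)) by (rewrite !S_INR, plus_INR, mult_INR; simpl; ring).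
    ring. Qed.

Definition FejR (N : nat) (al : R) :=
  rsum (2 * N + 1) (fun j => (INR (S N) - Rabs (INR j - INR N)) * cos ((INR j - INR N) * al)).

Lemma FejR_Fej N al : FejR N al = Fej N al.
Proof. unfold FejR. rewrite (rsum_sym N (fun u => (INR (S N) - Rabs u) * cos (u * al))).
  unfold Fej. rewrite Rabs_R0. replace (0 * al) with 0 by ring. rewrite cos_0.
  rewrite <- rsum_scal. f_equal; [ring|]. apply rsum_ext; intros.
  rewrite Rabs_Ropp, Rabs_pos_eq by (apply pos_INR).
  replace (- INR (S i) * al) with (- (INR (S i) * al)) by ring. rewrite cos_neg.
  rewrite !S_INR. ring. Qed.


Lemma sigma_sq X k : Cmod (Sx X k) ^ 2 = lsum X (fun x => lsum X (fun x' => cos (IZR k * (2*PI*(x - x'))))).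
Proof. rewrite Cmod_sq. unfold Sx. rewrite fst_Csum_list, snd_Csum_list. simpl fst; simpl snd.
  rewrite <- !Rsqr_pow2. unfold Rsqr. rewrite !lsum_sq, <- lsum_plus. apply lsum_ext; intros.
  rewrite <- lsum_plus. apply lsum_ext; intros. rewrite <- cos_minus. f_equal. ring. Qed.

Lemma weighted_total X N :
  rsum (2*N+1) (fun j => (INR (S N) - Rabs (INR j - INR N)) * Cmod (Sx X (Z.of_nat j - Z.of_nat N)) ^ 2)
  = lsum X (fun x => lsum X (fun x' => Fej N (2*PI*(x-x')))).
Proof.
  rewrite (rsum_ext _ _ (fun j => lsum X (fun x => lsum X (fun x' =>
     (INR (S N) - Rabs (INR j - INR N)) * cos ((INR j - INR N) * (2*PI*(x - x'))))))).
  2:{ intros. rewrite sigma_sq, <- lsum_scal. apply lsum_ext; intros. rewrite <- lsum_scal. apply lsum_ext; intros.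
      rewrite minus_IZR, <- !INR_IZR_INZ. auto. }
  rewrite <- lsum_rsum_swap. apply lsum_ext; intros. rewrite <- lsum_rsum_swap. apply lsum_ext; intros.
  rewrite <- FejR_Fej. unfold FejR. auto. Qed.


Definition sp (delta : R) (l : list R) : Prop :=
  NoDup l /\ (forall x x', In x l -> In x' l -> x <> x' -> delta <= Rabs (x - x')).

Lemma exists_max (f : R -> R) l : l <> [] -> exists x, In x l /\ forall y, In y l -> f y <= f x.
Proof. induction l as [|a l IH]; intros H; [congruence|].
  destruct l as [|b l'].
  - exists a; split; [left; auto|]. intros y [<-|[]]; lra.
  - destruct IH as [x [Hx Hm]]; [discriminate|].
    destruct (Rle_dec (f a) (f x)).
    + exists x; split; [right; auto|]. intros y [<-|Hy]; auto.
    + exists a; split; [left; auto|]. intros y [<-|Hy]; [lra|]. specialize (Hm y Hy); lra. Qed.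

Lemma sp_remove delta l1 x l2 : sp delta (l1 ++ x :: l2) -> sp delta (l1 ++ l2).
Proof. intros [Hn Hs]. split. eapply NoDup_remove_1; eauto.
  intros. apply Hs; auto.
  - apply in_app_or in H; apply in_or_app; destruct H; auto; right; right; auto.
  - apply in_app_or in H0; apply in_or_app; destruct H0; auto; right; right; auto. Qed.

Lemma sp_remove_ne delta l1 x l2 y : sp delta (l1 ++ x :: l2) -> In y (l1 ++ l2) -> y <> x.
Proof. intros [Hn Hs] Hy. assert (H := NoDup_remove_2 _ _ _ Hn). intro; subst; contradiction. Qed.

Lemma in_rem (l1 : list R) x l2 y : In y (l1 ++ l2) -> In y (l1 ++ x :: l2).
Proof. intros H; apply in_app_or in H; apply in_or_app; destruct H; auto; right; right; auto. Qed.

Lemma lsum_split l1 x l2 f : lsum (l1 ++ x :: l2) f = f x + lsum (l1 ++ l2) f.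
Proof. rewrite !lsum_app. simpl. ring. Qed.

Lemma counting delta (Hd : 0 < delta) : forall n l a b, length l = S n -> sp delta l ->
  (forall x, In x l -> a <= x <= b) -> INR n * delta <= b - a.
Proof. induction n; intros l a b Hlen Hsp Hin.
  - destruct l as [|x l]; [discriminate|]. specialize (Hin x (or_introl eq_refl)). simpl. lra.
  - destruct (exists_max (fun t => t) l) as [x [Hx Hm]]; [intro; subst; discriminate|].
    destruct (in_split _ _ Hx) as [l1 [l2 E]]. subst l.
    assert (Hlen2 : length (l1 ++ l2) = S n) by (rewrite length_app in *; simpl in *; lia).
    assert (IH := IHn (l1 ++ l2) a (x - delta) Hlen2 (sp_remove _ _ _ _ Hsp)).
    assert (H1 : INR n * delta <= x - delta - a).
    { apply IH. intros y Hy. split. apply Hin, in_rem; auto.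
      assert (y <> x) by (eapply sp_remove_ne; eauto).
      assert (y <= x) by (apply Hm, in_rem; auto).
      destruct Hsp as [_ Hs]. assert (delta <= Rabs (y - x)) by (apply Hs; auto; apply in_rem; auto).
      rewrite Rabs_left1 in H1; lra. }
    assert (x <= b) by (apply Hin; auto). rewrite S_INR. lra. Qed.

Lemma window delta (Hd : 0 < delta) (m : R) (phi : R -> R) (B : nat -> R) :
  forall n l, length l = n -> sp delta l ->
  (forall d j, In d l -> INR j * delta / 2 <= Rabs (d - m) -> phi d <= B j) ->
  lsum l phi <= rsum n B.
Proof. induction n; intros l Hlen Hsp Hphi.
  - destruct l; [simpl; lra|discriminate].
  - destruct (exists_max (fun t => Rabs (t - m)) l) as [x [Hx Hm]]; [intro; subst; discriminate|].
    destruct (in_split _ _ Hx) as [l1 [l2 E]]. subst l.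
    assert (Hlen2 : length (l1 ++ l2) = n) by (rewrite length_app in *; simpl in *; lia).
    rewrite lsum_split, rsum_S.
    assert (lsum (l1 ++ l2) phi <= rsum n B).
    { apply IHn; auto. eapply sp_remove; eauto. intros; apply Hphi; auto; apply in_rem; auto. }
    assert (phi x <= B n).
    { apply Hphi; auto.
      assert (INR n * delta <= (m + Rabs (x - m)) - (m - Rabs (x - m))).
      { apply (counting delta Hd n (l1 ++ x :: l2)); auto.
        intros y Hy. specialize (Hm y Hy). pose proof (Rle_abs (y - m)). pose proof (Rle_abs (-(y - m))). rewrite Rabs_Ropp in *. lra. }
      lra. }
    lra. Qed.

Lemma windows delta (Hd : 0 < delta) (m : R) (phi : R -> R) (C : R) :
  (forall t l, sp delta l -> (forall d, In d l -> m + INR t - /2 <= d < m + INR t + /2) -> lsum l phi <= C) ->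
  forall W t l, sp delta l -> (forall d, In d l -> m + INR t - /2 <= d < m + INR t - /2 + INR W) ->
  lsum l phi <= INR W * C.
Proof. intros Hwin. induction W; intros t l Hsp Hin.
  - destruct l as [|x l]; [simpl; lra|]. specialize (Hin x (or_introl eq_refl)). simpl in Hin. lra.
  - set (p := fun d => if Rlt_dec d (m + INR t + /2) then true else false).
    rewrite (lsum_filter l phi p).
    assert (Hsp1 : forall q, sp delta (filter q l)).
    { intros q. destruct Hsp as [Hn Hs]. split. apply NoDup_filter; auto.
      intros x x' Hx Hx'. apply filter_In in Hx, Hx'. apply Hs; tauto. }
    assert (lsum (filter p l) phi <= C).
    { apply (Hwin t); auto. intros d Hd'. apply filter_In in Hd' as [Hdl Hp].
      unfold p in Hp. destruct Rlt_dec; [|discriminate]. specialize (Hin d Hdl). lra. }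
    assert (lsum (filter (fun x => negb (p x)) l) phi <= INR W * C).
    { apply (IHW (S t)); auto. intros d Hd'. apply filter_In in Hd' as [Hdl Hp].
      unfold p in Hp. destruct Rlt_dec; [discriminate|]. specialize (Hin d Hdl). rewrite S_INR in *. lra. }
    rewrite S_INR. lra. Qed.


Lemma PI_bounds : 3.1415 <= PI <= 3.1421.
Proof. destruct (PI_2_3_7_ineq 1) as [H1 H2].
  unfold tg_alt, PI_2_3_7_tg, Ratan_seq in *. simpl in *. lra. Qed.

Lemma sin_lb3 x : 0 <= x -> x <= PI -> x - x^3/6 <= sin x.
Proof. intros H0 H1. destruct (SIN x H0 H1) as [H _]. eapply Rle_trans; [|exact H].
  unfold sin_lb, sin_approx, sin_term. simpl. pose proof PI_bounds.
  assert (x*x <= 16) by nra. assert (0 <= x^5) by (apply pow_le; auto).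
  assert (x^7 = x^5 * (x*x)) by ring. 
  replace (INR (fact 7)) with 5040 by (simpl; lra). replace (INR (fact 5)) with 120 by (simpl; lra).
  replace (INR (fact 3)) with 6 by (simpl; lra). replace (INR (fact 1)) with 1 by (simpl; lra). 
  nra. Qed.

Lemma sin_IZR_PI z : sin (IZR z * PI) = 0.
Proof. apply sin_eq_0_1. exists z; auto. Qed.

Lemma cos_period_Z t z : cos (t + 2 * PI * IZR z) = cos t.
Proof. rewrite cos_plus.
  assert (sin (2 * PI * IZR z) = 0) by (replace (2 * PI * IZR z) with (IZR (2*z) * PI) by (rewrite mult_IZR; ring); apply sin_IZR_PI).
  assert (cos (2 * PI * IZR z) = 1).
  { replace (2 * PI * IZR z) with (2 * (IZR z * PI)) by ring. rewrite cos_2a_sin, sin_IZR_PI. ring. }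
  rewrite H, H0. ring. Qed.

Lemma one_minus_cos u : Rabs u <= /2 -> (68/10) * u^2 <= 1 - cos (2 * PI * u).
Proof. intros Hu. replace (2 * PI * u) with (2 * (PI * u)) by ring. rewrite cos_2a_sin.
  pose proof PI_bounds as HP.
  assert (Hs : forall v, 0 <= v <= /2 -> (68/10) * v^2 <= 2 * (sin (PI * v) * sin (PI * v))).
  { intros v Hv. assert (h := sin_lb3 (PI * v)). 
    assert (Ha : PI * v - (PI*v)^3/6 <= sin (PI * v)) by (apply h; nra).
    assert (Hb : PI * v - (PI*v)^3/6 >= (588/1000) * PI * v).
    { assert (0 <= PI*v <= 1.5711) by (split; nra). assert ((PI*v)^2 <= 2.47) by nra. 
      replace ((PI*v)^3) with ((PI*v)^2 * (PI*v)) by ring. nra. }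
    assert (0 <= (588/1000) * PI * v) by nra.
    assert (Hq: ((588/1000) * PI * v)^2 <= sin (PI*v) * sin(PI*v)) by nra.
    assert (PI^2 >= 9.869) by nra.
    assert (0 <= v^2) by nra.
    replace (((588/1000) * PI * v)^2) with ((345744/1000000) * PI^2 * v^2) in Hq by field. nra. }
  destruct (Rle_dec 0 u).
  - rewrite Rabs_pos_eq in Hu by auto. specialize (Hs u (conj r Hu)). lra.
  - apply Rnot_le_lt in n. rewrite Rabs_left in Hu by lra. assert (0 <= -u) by lra. specialize (Hs (-u) (conj H Hu)).
    replace (PI * - u) with (- (PI * u)) in Hs by ring. rewrite sin_neg in Hs. 
    replace ((-u)^2) with (u^2) in Hs by ring. lra. Qed.


Lemma inv_sq_sum n : rsum (S n) (fun j => / INR (S j) ^ 2) <= 2 - / INR (S n).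
Proof. induction n.
  - simpl. lra.
  - rewrite rsum_S. set (a := INR (S n)) in *.
    assert (Ha : 1 <= a) by (unfold a; rewrite S_INR; pose proof (pos_INR n); lra).
    replace (INR (S (S n))) with (a + 1) by (unfold a; rewrite (S_INR (S n)); ring).
    assert (/ (a+1)^2 <= /a - /(a+1)).
    { replace (/a - /(a+1)) with (/ (a*(a+1))) by (field; lra).
      apply Rinv_le_contravar. nra. nra. }
    lra. Qed.

Lemma inv_sq_sum2 n : rsum n (fun j => / INR (S j) ^ 2) <= 2.
Proof. destruct n. simpl; lra. pose proof (inv_sq_sum n). 
  assert (0 < / INR (S n)) by (apply Rinv_0_lt_compat, lt_0_INR; lia). lra. Qed.

Definition Bf (N : nat) (delta : R) (j : nat) : R :=
  match j with O => INR (S N) ^ 2 | S j' => 8 / ((68/10) * delta ^ 2) * / INR (S j') ^ 2 end.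

Lemma Bf_sum N delta n : 0 < delta -> rsum n (Bf N delta) <= INR (S N) ^ 2 + 16 / ((68/10) * delta ^ 2).
Proof. intros Hd. destruct n. { change (rsum 0 (Bf N delta)) with 0. assert (0 <= INR (S N) ^2) by apply pow2_ge_0.
    assert (0 < 16 / ((68/10) * delta^2)) by (apply Rdiv_lt_0_compat; [lra|apply Rmult_lt_0_compat; [lra|apply pow_lt; lra]]). lra. }
  rewrite rsum_shift. rewrite (rsum_ext n _ (fun i => 8 / ((68/10) * delta ^ 2) * / INR (S i) ^ 2)) by (intros; reflexivity). change (Bf N delta 0) with (INR (S N) ^ 2). rewrite rsum_scal. 
  assert (h := inv_sq_sum2 n). assert (0 < 8 / ((68/10) * delta^2)) by (apply Rdiv_lt_0_compat; [lra|apply Rmult_lt_0_compat; [lra|apply pow_lt; lra]]).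
  assert (8 / ((68/10) * delta ^ 2) * rsum n (fun j => / INR (S j) ^ 2) <= 8 / ((68/10) * delta ^ 2) * 2) by (apply Rmult_le_compat_l; lra).
  replace (16 / ((68/10) * delta ^ 2)) with (8 / ((68/10) * delta ^ 2) * 2) by (field; lra). lra. Qed.

Lemma fej_point N delta (z : Z) d j : 0 < delta -> Rabs (d - IZR z) <= /2 ->
  INR j * delta / 2 <= Rabs (d - IZR z) -> Fej N (2 * PI * d) <= Bf N delta j.
Proof. intros Hd Hu Hj. destruct j as [|j].
  - simpl Bf. apply Fej_le.
  - change (Bf N delta (S j)) with (8 / ((68/10) * delta ^ 2) * / INR (S j) ^ 2). set (u := d - IZR z) in *.
    assert (Hc : cos (2 * PI * d) = cos (2 * PI * u)).
    { unfold u. rewrite <- (cos_period_Z (2 * PI * (d - IZR z)) z). f_equal. ring. }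
    assert (H1 := one_minus_cos u Hu).
    assert (H2 := Fej_le2 N (2 * PI * d)). rewrite Hc in H2.
    assert (Hj0 : 0 < INR (S j)) by (apply lt_0_INR; lia).
    assert (Hu0 : 0 < Rabs u) by nra.
    set (t := INR (S j) * delta / 2) in *.
    assert (Ht : 0 < t) by (unfold t; nra).
    assert (Hut : t ^ 2 <= u ^ 2).
    { rewrite <- (Rsqr_pow2 u), Rsqr_abs, Rsqr_pow2. nra. }
    set (F := Fej N (2 * PI * d)) in *.
    assert (Hgoal : F * ((68/10) * t ^ 2) <= 2).
    { destruct (Rle_dec F 0). assert (0 < (68/10) * t^2) by nra. nra.
      assert ((68/10) * t^2 <= 1 - cos (2 * PI * u)) by nra. nra. }
    replace (8 / ((68/10) * delta ^ 2) * / INR (S j) ^ 2) with (2 / ((68/10) * t ^ 2))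
      by (unfold t; field; lra).
    apply (Rmult_le_reg_r ((68/10) * t ^ 2)). nra.
    replace (2 / ((68/10) * t ^ 2) * ((68/10) * t ^ 2)) with 2 by (field; apply Rgt_not_eq; exact Ht). lra.
Qed.


Lemma NoDup_map_inj (f : R -> R) l : (forall a b, f a = f b -> a = b) -> NoDup l -> NoDup (map f l).
Proof. intros Hf Hn. induction Hn; simpl; constructor; auto.
  intro H'. apply in_map_iff in H'. destruct H' as [y [Hy Hy']]. apply Hf in Hy. subst; auto. Qed.

Lemma sp_map delta x l : sp delta l -> sp delta (map (fun x' => x - x') l).
Proof. intros [Hn Hs]. split.
  - apply NoDup_map_inj; auto. intros; lra.
  - intros a b Ha Hb Hab. apply in_map_iff in Ha as [a' [<- Ha']]. apply in_map_iff in Hb as [b' [<- Hb']].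
    replace (x - a' - (x - b')) with (- (a' - b')) by ring. rewrite Rabs_Ropp. apply Hs; auto. intro; subst; auto. Qed.

Lemma per_x delta P N X x : 0 < delta -> 0 < P -> sp delta X -> (forall x', In x' X -> -P <= x' <= P) ->
  lsum X (fun x' => Fej N (2*PI*(x - x'))) <= (2*P+2) * (INR (S N) ^ 2 + 16 / ((68/10) * delta ^ 2)).
Proof.
  intros Hd HP Hsp HX.
  set (C := INR (S N) ^ 2 + 16 / ((68/10) * delta ^ 2)).
  assert (HC : 0 <= C).
  { unfold C. assert (0 <= INR (S N)^2) by apply pow2_ge_0.
    assert (0 < 16 / ((68/10) * delta^2)) by (apply Rdiv_lt_0_compat; [lra|apply Rmult_lt_0_compat; [lra|apply pow_lt; lra]]). lra. }
  rewrite <- (lsum_map X (fun d => Fej N (2*PI*d)) (fun x' => x - x')).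
  set (A := x - P).
  set (z0 := (up (A + /2) - 1)%Z).
  destruct (archimed (A + /2)) as [Hu1 Hu2].
  assert (Hm : A - /2 < IZR z0 <= A + /2) by (unfold z0; rewrite minus_IZR; simpl; lra).
  set (W := Z.to_nat (up (2*P+1))).
  destruct (archimed (2*P+1)) as [Hw1 Hw2].
  assert (HW : INR W = IZR (up (2*P+1))).
  { unfold W. rewrite INR_IZR_INZ, Z2Nat.id; auto. apply le_IZR. lra. }
  apply Rle_trans with (INR W * C); [|apply Rmult_le_compat_r; lra].
  apply (windows delta Hd (IZR z0) _ C) with (t := 0%nat).
  - intros t l Hl Hin.
    apply Rle_trans with (rsum (length l) (Bf N delta)); [|apply Bf_sum; auto].
    apply (window delta Hd (IZR (z0 + Z.of_nat t))) with (n := length l); auto.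
    intros d j Hdl Hj. apply fej_point with (z := (z0 + Z.of_nat t)%Z); auto.
    specialize (Hin d Hdl). rewrite plus_IZR, <- INR_IZR_INZ.
    apply Rabs_le. lra.
  - apply sp_map; auto.
  - intros d Hdl. apply in_map_iff in Hdl as [x' [<- Hx']]. specialize (HX x' Hx').
    simpl INR. rewrite HW. unfold A in *. lra.
Qed.

Lemma Phi_bound1 delta P N X : 0 < delta -> 0 < P -> sp delta X -> (forall x', In x' X -> -P <= x' <= P) ->
  lsum X (fun x => lsum X (fun x' => Fej N (2*PI*(x - x')))) <=
  INR (length X) * ((2*P+2) * (INR (S N) ^ 2 + 16 / ((68/10) * delta ^ 2))).
Proof. intros. rewrite <- lsum_const. apply lsum_le. intros. apply per_x; auto. Qed.

Lemma Phi_bound2 N X :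
  lsum X (fun x => lsum X (fun x' => Fej N (2*PI*(x - x')))) <= INR (length X) * (INR (length X) * INR (S N) ^ 2).
Proof. rewrite <- lsum_const. apply lsum_le. intros. rewrite <- lsum_const. apply lsum_le. intros. apply Fej_le. Qed.


Lemma dsum n (f f' : nat -> R -> R) t : (forall i, derivable_pt_lim (f i) t (f' i t)) ->
  derivable_pt_lim (fun t => rsum n (fun i => f i t)) t (rsum n (fun i => f' i t)).
Proof. intros H. induction n.
  - simpl. exact (derivable_pt_lim_const 0 t).
  - simpl. exact (derivable_pt_lim_plus (fun t => rsum n (fun i => f i t)) (f n) t _ _ IHn (H n)). Qed.

Lemma d_lin a t : derivable_pt_lim (fun t => a * t) t a.
Proof. assert (H := derivable_pt_lim_scal id a t 1 (derivable_pt_lim_id t)). replace (a * 1) with a in H by ring. exact H. Qed.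

Lemma d_sin_lin a t : derivable_pt_lim (fun t => sin (a * t)) t (cos (a * t) * a).
Proof. exact (derivable_pt_lim_comp (fun t => a * t) sin t a (cos (a*t)) (d_lin a t) (derivable_pt_lim_sin _)). Qed.

Lemma d_cos_lin a t : derivable_pt_lim (fun t => cos (a * t)) t (- sin (a * t) * a).
Proof. exact (derivable_pt_lim_comp (fun t => a * t) cos t a (- sin (a*t)) (d_lin a t) (derivable_pt_lim_cos _)). Qed.

Lemma d_scal k (f : R -> R) t l : derivable_pt_lim f t l -> derivable_pt_lim (fun t => k * f t) t (k * l).
Proof. intros H. exact (derivable_pt_lim_scal f k t l H). Qed.

Definition hfun (m : Z) (t : R) : R :=
  if Z.eq_dec m 0 then t else / (2 * PI * IZR m) * sin (2 * PI * IZR m * t).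

Lemma d_hfun m t : derivable_pt_lim (hfun m) t (cos (2 * PI * IZR m * t)).
Proof. unfold hfun. destruct (Z.eq_dec m 0).
  - subst. replace (cos (2 * PI * IZR 0 * t)) with 1 by (simpl; replace (2 * PI * 0 * t) with 0 by ring; rewrite cos_0; auto).
    exact (derivable_pt_lim_id t).
  - assert (Ha : 2 * PI * IZR m <> 0).
    { apply Rmult_integral_contrapositive; split. pose proof PI_RGT_0; lra. apply not_0_IZR; auto. }
    replace (cos (2 * PI * IZR m * t)) with (/ (2 * PI * IZR m) * (cos (2 * PI * IZR m * t) * (2 * PI * IZR m))) by (field; repeat split; try (pose proof PI_RGT_0; lra); try (apply not_0_IZR; auto); auto).
    apply d_scal, d_sin_lin. Qed.

Lemma rsum_minus_l n f g : rsum n (fun i => f i - g i) = rsum n f - rsum n g.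
Proof. induction n; simpl; try rewrite IHn; ring. Qed.

Section Integral.
Variables (n : nat) (c : nat -> R) (y : nat -> Z).

Definition gfun (t : R) := rsum n (fun i => rsum n (fun i' => c i * c i' * cos (2 * PI * IZR (y i - y i') * t))).
Definition Gfun (t : R) := rsum n (fun i => rsum n (fun i' => c i * c i' * hfun (y i - y i') t)).
Definition gder (t : R) := rsum n (fun i => rsum n (fun i' => c i * c i' * (- sin (2 * PI * IZR (y i - y i') * t) * (2 * PI * IZR (y i - y i'))))).

Lemma G_deriv t : derivable_pt_lim Gfun t (gfun t).
Proof. unfold Gfun, gfun. apply (dsum n (fun i t => rsum n (fun i' => c i * c i' * hfun (y i - y i') t))
     (fun i t => rsum n (fun i' => c i * c i' * cos (2 * PI * IZR (y i - y i') * t)))).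
  intros i. apply (dsum n (fun i' t => c i * c i' * hfun (y i - y i') t)
     (fun i' t => c i * c i' * cos (2 * PI * IZR (y i - y i') * t))).
  intros i'. apply d_scal, d_hfun. Qed.

Lemma g_deriv t : derivable_pt_lim gfun t (gder t).
Proof. unfold gder, gfun. apply (dsum n (fun i t => rsum n (fun i' => c i * c i' * cos (2 * PI * IZR (y i - y i') * t)))
     (fun i t => rsum n (fun i' => c i * c i' * (- sin (2 * PI * IZR (y i - y i') * t) * (2 * PI * IZR (y i - y i')))))).
  intros i. apply (dsum n (fun i' t => c i * c i' * cos (2 * PI * IZR (y i - y i') * t))
     (fun i' t => c i * c i' * (- sin (2 * PI * IZR (y i - y i') * t) * (2 * PI * IZR (y i - y i'))))).
  intros i'. apply d_scal, d_cos_lin. Qed.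

Lemma g_cont : continuity gfun.
Proof. intros t. apply derivable_continuous_pt. exists (gder t). apply g_deriv. Qed.

Definition G_derivable : derivable Gfun := fun t => exist _ (gfun t) (G_deriv t).

Lemma derive_G : derive Gfun G_derivable = gfun.
Proof. apply functional_extensionality. intros t. unfold derive. apply derive_pt_eq_0. apply G_deriv. Qed.

Lemma G_cont1 : continuity (derive Gfun G_derivable).
Proof. rewrite derive_G. apply g_cont. Qed.

Definition G_C1 : C1_fun := {| c1 := Gfun; diff0 := G_derivable; cont1 := G_cont1 |}.

Lemma hfun_01 m : hfun m 1 - hfun m 0 = if Z.eq_dec m 0 then 1 else 0.
Proof. unfold hfun. destruct (Z.eq_dec m 0). ring.
  rewrite Rmult_1_r, Rmult_0_r, sin_0.
  replace (2 * PI * IZR m) with (IZR (2 * m) * PI) by (rewrite mult_IZR; simpl; ring).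
  rewrite sin_eq_0_1 by (exists (2*m)%Z; auto). ring. Qed.

Lemma int_g (pr : Riemann_integrable gfun 0 1) :
  RiemannInt pr = rsum n (fun i => rsum n (fun i' => c i * c i' * (if Z.eq_dec (y i - y i') 0 then 1 else 0))).
Proof.
  assert (pr2 : Riemann_integrable (derive G_C1 (diff0 G_C1)) 0 1).
  { simpl. rewrite derive_G. exact pr. }
  rewrite (RiemannInt_P18 pr pr2) by (try lra; intros; simpl; rewrite derive_G; auto).
  rewrite FTC_Riemann. simpl. unfold Gfun. rewrite <- rsum_minus_l. apply rsum_ext; intros.
  rewrite <- rsum_minus_l. apply rsum_ext; intros. rewrite <- hfun_01. ring. Qed.
End Integral.


Lemma fstar_sq n a y t : Cmod (fstar n a y t) ^ 2 = gfun n (fun i => Cmod (a i)) y t.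
Proof. rewrite Cmod_sq. unfold fstar. rewrite fst_Csum_nat, snd_Csum_nat. unfold gfun.
  rewrite (rsum_ext n (fun i => fst (Cmult (RtoC (Cmod (a i))) (e (t * IZR (y i))))) (fun i => Cmod (a i) * cos (2*PI*(t * IZR (y i))))) by (intros; unfold Cmult, RtoC, e; simpl; ring).
  rewrite (rsum_ext n (fun i => snd (Cmult (RtoC (Cmod (a i))) (e (t * IZR (y i))))) (fun i => Cmod (a i) * sin (2*PI*(t * IZR (y i))))) by (intros; unfold Cmult, RtoC, e; simpl; ring).
  rewrite <- !Rsqr_pow2. unfold Rsqr. rewrite !rsum_sq, <- rsum_plus. apply rsum_ext; intros.
  rewrite <- rsum_plus. apply rsum_ext; intros.
  rewrite minus_IZR.
  replace (2 * PI * (IZR (y i) - IZR (y i0)) * t) with (2*PI*(t * IZR (y i)) - 2*PI*(t * IZR (y i0))) by ring.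
  rewrite cos_minus. ring. Qed.

Lemma integral_value n a y (pr : Riemann_integrable (fun t => Cmod (fstar n a y t) ^ 2) 0 1) :
  RiemannInt pr = rsum n (fun i => rsum n (fun i' => Cmod (a i) * Cmod (a i') * (if Z.eq_dec (y i - y i') 0 then 1 else 0))).
Proof.
  assert (E : (fun t => Cmod (fstar n a y t) ^ 2) = gfun n (fun i => Cmod (a i)) y).
  { apply functional_extensionality; intros; apply fstar_sq. }
  revert pr. rewrite E. intros pr. apply int_g. Qed.


Lemma main_bound (X : list R) (n : nat) (a : nat -> Cx) (y : nat -> Z) (N Kn : nat)
  (pr : Riemann_integrable (fun t => Cmod (fstar n a y t) ^ 2) 0 1) :
  (forall i, (i < n)%nat -> (Z.abs (y i) <= Z.of_nat Kn)%Z) -> (Kn <= N)%nat ->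
  Cmod (Csum_list X (fsum n a y)) ^ 2 <=
  RiemannInt pr / (INR (S N) - INR Kn) * lsum X (fun x => lsum X (fun x' => Fej N (2*PI*(x-x')))).
Proof.
  intros Hy HKN.
  set (c := fun i => Cmod (a i)).
  set (jdx := fun i => Z.to_nat (y i + Z.of_nat N)).
  assert (Hj : forall i, (i < n)%nat -> Z.of_nat (jdx i) = (y i + Z.of_nat N)%Z /\ (jdx i < 2*N+1)%nat).
  { intros i Hi. specialize (Hy i Hi). unfold jdx. split. apply Z2Nat.id. lia. lia. }
  set (sg := fun j => Cmod (Sx X (Z.of_nat j - Z.of_nat N))).
  set (w := fun j => INR (S N) - Rabs (INR j - INR N)).
  assert (H1 : Cmod (Csum_list X (fsum n a y)) <= rsum n (fun i => c i * sg (jdx i))).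
  { eapply Rle_trans; [apply step1|]. right. apply rsum_ext; intros i Hi. unfold sg, c.
    destruct (Hj i Hi) as [E _]. rewrite E. do 3 f_equal. ring. }
  assert (H2 : rsum n (fun i => c i * sg (jdx i)) = rsum (2*N+1) (fun j => bb n c jdx j * sg j)).
  { apply grouping. intros; apply Hj; auto. }
  assert (Hw1 : forall j, (j < 2*N+1)%nat -> Rabs (INR j - INR N) <= INR N).
  { intros j Hjl. assert (INR j <= 2 * INR N) by (replace (2 * INR N) with (INR (2*N)) by (rewrite mult_INR; simpl; ring); apply le_INR; lia).
    pose proof (pos_INR j). apply Rabs_le. lra. }
  assert (Hw : forall j, (j < 2*N+1)%nat -> 0 < w j).
  { intros j Hjl. unfold w. rewrite S_INR. specialize (Hw1 j Hjl). lra. }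
  assert (H3 := weighted_CS (2*N+1) (bb n c jdx) sg w Hw).
  assert (H4 : rsum (2*N+1) (fun j => w j * sg j ^ 2) = lsum X (fun x => lsum X (fun x' => Fej N (2*PI*(x-x'))))).
  { rewrite <- weighted_total. apply rsum_ext; intros. unfold w, sg. auto. }
  assert (HKpos : 0 < INR (S N) - INR Kn) by (rewrite S_INR; assert (INR Kn <= INR N) by (apply le_INR; auto); lra).
  assert (H5 : rsum (2*N+1) (fun j => bb n c jdx j ^ 2 / w j) <= rsum (2*N+1) (fun j => bb n c jdx j ^ 2) / (INR (S N) - INR Kn)).
  { unfold Rdiv. rewrite <- rsum_scal_r. apply rsum_le. intros j Hjl.
    destruct (classic (exists i, (i < n)%nat /\ jdx i = j)) as [[i [Hi Hji]]|Hno].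
    - apply Rmult_le_compat_l; [apply pow2_ge_0|]. apply Rinv_le_contravar; auto.
      unfold w. destruct (Hj i Hi) as [E _].
      assert (INR j - INR N = IZR (y i)).
      { rewrite <- Hji, INR_IZR_INZ, E, plus_IZR, <- INR_IZR_INZ. ring. }
      rewrite H. specialize (Hy i Hi). assert (Rabs (IZR (y i)) <= INR Kn).
      { rewrite <- abs_IZR, INR_IZR_INZ. apply IZR_le. auto. }
      lra.
    - rewrite bb_zero. simpl. lra. intros i Hi Heq. apply Hno. exists i; auto. }
  assert (H6 : rsum (2*N+1) (fun j => bb n c jdx j ^ 2) = RiemannInt pr).
  { rewrite Qgroup by (intros; apply Hj; auto). rewrite integral_value. apply rsum_ext; intros i Hi.
    apply rsum_ext; intros i' Hi'. unfold c. f_equal. unfold ind.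
    destruct (Hj i Hi) as [Ei _]. destruct (Hj i' Hi') as [Ei' _].
    destruct (Nat.eq_dec (jdx i) (jdx i')) as [h|h]; destruct (Z.eq_dec (y i - y i') 0) as [h'|h']; auto.
    all: exfalso; first [apply h'; rewrite h in Ei; lia | apply h; apply (Nat2Z.inj (jdx i) (jdx i')); lia]. }
  assert (HPhi : 0 <= rsum (2*N+1) (fun j => w j * sg j ^ 2)).
  { apply rsum_nonneg. intros. specialize (Hw i H). assert (0 <= sg i ^2) by apply pow2_ge_0. nra. }
  assert (H0 : 0 <= Cmod (Csum_list X (fsum n a y))) by apply Cmod_nonneg.
  rewrite <- H4, <- H6.
  apply Rle_trans with (rsum n (fun i => c i * sg (jdx i)) ^ 2).
  { apply pow_incr; auto. }
  rewrite H2. eapply Rle_trans; [exact H3|]. apply Rmult_le_compat_r; auto.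
Qed.

Lemma I_nonneg (n : nat) (a : nat -> Cx) (y : nat -> Z) (Kn : nat)
  (pr : Riemann_integrable (fun t => Cmod (fstar n a y t) ^ 2) 0 1) :
  (forall i, (i < n)%nat -> (Z.abs (y i) <= Z.of_nat Kn)%Z) -> 0 <= RiemannInt pr.
Proof.
  intros Hy. set (N := Kn).
  set (c := fun i => Cmod (a i)).
  set (jdx := fun i => Z.to_nat (y i + Z.of_nat N)).
  assert (Hj : forall i, (i < n)%nat -> Z.of_nat (jdx i) = (y i + Z.of_nat N)%Z /\ (jdx i < 2*N+1)%nat).
  { intros i Hi. specialize (Hy i Hi). unfold jdx. split. apply Z2Nat.id. lia. lia. }
  assert (H6 : rsum (2*N+1) (fun j => bb n c jdx j ^ 2) = RiemannInt pr).
  { rewrite Qgroup by (intros; apply Hj; auto). rewrite integral_value. apply rsum_ext; intros i Hi.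
    apply rsum_ext; intros i' Hi'. unfold c. f_equal. unfold ind.
    destruct (Hj i Hi) as [Ei _]. destruct (Hj i' Hi') as [Ei' _].
    destruct (Nat.eq_dec (jdx i) (jdx i')) as [h|h]; destruct (Z.eq_dec (y i - y i') 0) as [h'|h']; auto.
    all: exfalso; first [apply h'; rewrite h in Ei; lia | apply h; apply (Nat2Z.inj (jdx i) (jdx i')); lia]. }
  rewrite <- H6. apply rsum_nonneg. intros; apply pow2_ge_0. Qed.


Lemma final_sqrt z A B C : 0 <= z -> 0 <= A -> 0 <= B -> 0 <= C ->
  z ^ 2 <= PI ^ 2 * A * B * C -> z <= PI * sqrt A * sqrt B * sqrt C.
Proof. intros Hz HA HB HC H.
  assert (Hr : 0 <= PI * sqrt A * sqrt B * sqrt C).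
  { pose proof PI_RGT_0. pose proof (sqrt_pos A). pose proof (sqrt_pos B). pose proof (sqrt_pos C).
    assert (0 <= PI) by lra. apply Rmult_le_pos; [apply Rmult_le_pos; [apply Rmult_le_pos|]|]; auto. }
  assert (Hr2 : (PI * sqrt A * sqrt B * sqrt C) ^ 2 = PI ^ 2 * A * B * C).
  { rewrite !Rpow_mult_distr, !pow2_sqrt; auto. }
  set (r := PI * sqrt A * sqrt B * sqrt C) in *.
  destruct (Rle_dec z r); auto. exfalso. apply Rnot_le_lt in n.
  assert (r*r < z*z) by (apply Rmult_le_0_lt_compat; lra). simpl in *. lra. Qed.

Theorem lemma1 (delta P T : R) (X : list R) (n : nat) (a : nat -> Cx) (y : nat -> Z)
  (Hdelta : 0 < delta) (HP : 0 < P)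
  (HX : delta_spaced delta X)
  (HXP : forall x, In x X -> -P <= x <= P)
  (HT : 0 <= T)
  (Hy : forall i, (i < n)%nat -> Rabs (IZR (y i)) <= T)
  (pr : Riemann_integrable (fun t => Cmod (fstar n a y t) ^ 2) 0 1) :
  Cmod (Csum_list X (fsum n a y)) <=
    PI * sqrt (INR (length X) * T + INR (length X) / delta)
       * sqrt (P + 2) * sqrt (RiemannInt pr).
Proof.
  destruct HX as [Hnd [Hlen Hspc]].
  assert (Hsp : sp delta X) by (split; auto).
  pose proof PI_bounds as HPI.
  set (v := / delta).
  assert (Hv : 0 < v) by (apply Rinv_0_lt_compat; auto).
  destruct (archimed T) as [Ha1 Ha2].
  assert (HupT : (1 <= up T)%Z) by (apply le_IZR; simpl; assert (IZR (up T) > 0) by lra; 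
      destruct (Z_lt_le_dec (up T) 1) as [h|h]; [exfalso; assert (up T <= 0)%Z by lia; apply IZR_le in H0; simpl in H0; lra| apply IZR_le in h; auto]).
  set (Kn := Z.to_nat (up T - 1)).
  assert (HK : INR Kn = IZR (up T) - 1).
  { unfold Kn. rewrite INR_IZR_INZ, Z2Nat.id by lia. rewrite minus_IZR. auto. }
  assert (HyK : forall i, (i < n)%nat -> (Z.abs (y i) <= Z.of_nat Kn)%Z).
  { intros i Hi. specialize (Hy i Hi). rewrite <- abs_IZR in Hy.
    assert (IZR (Z.abs (y i)) < IZR (Z.of_nat Kn + 1)) by (rewrite plus_IZR, <- INR_IZR_INZ; simpl; lra).
    apply lt_IZR in H. lia. }
  assert (HI := I_nonneg n a y Kn pr HyK).
  set (I := RiemannInt pr) in *.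
  destruct X as [|x0 X']; [simpl in Hlen; lia|].
  set (X := x0 :: X') in *.
  assert (Hcnt := counting delta Hdelta (length X') X (-P) P eq_refl Hsp HXP).
  assert (HNX : INR (length X) = INR (length X') + 1) by (unfold X; simpl length; rewrite S_INR; auto).
  assert (Hm1 : 1 <= INR (length X')) by (apply (le_INR 1); simpl in Hlen; lia).
  set (NX := INR (length X)) in *.
  assert (HNXd : NX * delta <= 4 * P) by nra.
  set (S0 := Cmod (Csum_list X (fsum n a y))).
  assert (HS0 : 0 <= S0) by apply Cmod_nonneg.
  apply final_sqrt; auto.
  - unfold Rdiv. apply Rplus_le_le_0_compat; apply Rmult_le_pos; try lra. left; auto.
  - lra.
  - replace (NX / delta) with (NX * v) by (unfold v; field; lra).
    destruct (Nat.eq_dec Kn 0) as [HK0|HK0].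
    +
      assert (Hb := main_bound X n a y 0 Kn pr HyK ltac:(lia)).
      assert (Hp2 := Phi_bound2 0 X).
      rewrite HK0 in Hb. replace (INR (S 0) - INR 0) with 1 in Hb by (simpl; ring).
      replace (INR (S 0) ^ 2) with 1 in Hp2 by (simpl; ring).
      fold S0 NX in Hb, Hp2.
      assert (S0 ^ 2 <= I * (NX * NX)).
      { eapply Rle_trans; [exact Hb|]. unfold Rdiv. rewrite Rinv_1, Rmult_1_r. apply Rmult_le_compat_l; auto. lra. }
      assert (HNXv : NX <= PI^2 * (P+2) * v).
      { assert (HPI2 : PI^2 >= 9) by nra.
        assert (9 * (P+2) <= PI^2 * (P+2)) by (apply Rmult_le_compat_r; lra).
        assert (NX * delta <= PI^2 * (P+2)) by lra.
        unfold v. apply (Rmult_le_reg_r delta); auto. rewrite Rmult_assoc, Rinv_l by lra. lra. }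
      assert (0 <= NX) by lra.
      assert (h1 : NX * NX <= NX * (PI^2 * (P+2) * v)) by (apply Rmult_le_compat_l; lra).
      assert (h2 : 0 <= PI^2 * (P+2) * (NX * T)) by (apply Rmult_le_pos; [apply Rmult_le_pos; [apply pow2_ge_0|lra]|nra]).
      assert (h3 : NX * NX <= PI^2 * (NX * T + NX * v) * (P+2)) by (replace (PI^2 * (NX * T + NX * v) * (P+2)) with (PI^2 * (P+2) * (NX * T) + NX * (PI^2 * (P+2) * v)) by ring; lra).
      assert (h4 : I * (NX * NX) <= I * (PI^2 * (NX * T + NX * v) * (P+2))) by (apply Rmult_le_compat_l; auto).
      replace (PI ^ 2 * (NX * T + NX * v) * (P + 2) * I) with (I * (PI^2 * (NX * T + NX * v) * (P+2))) by ring.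
      lra.
    +
      destruct (archimed (3/2 * v)) as [Hb1 Hb2].
      assert (HLz : (1 <= up (3/2 * v))%Z).
      { apply le_IZR. destruct (Z_lt_le_dec (up (3/2*v)) 1) as [h|h]; [exfalso; assert (up (3/2*v) <= 0)%Z by lia; apply IZR_le in H; simpl in H; lra| apply IZR_le in h; auto]. }
      set (Ln := (Kn + Z.to_nat (up (3/2 * v)))%nat).
      assert (HL : INR Ln = INR Kn + IZR (up (3/2 * v))).
      { unfold Ln. rewrite plus_INR, (INR_IZR_INZ (Z.to_nat _)), Z2Nat.id by lia. auto. }
      set (N := (Kn + Ln - 1)%nat).
      assert (HSN : INR (S N) = INR Kn + INR Ln).
      { replace (S N) with (Kn + Ln)%nat by (unfold N, Ln; lia). apply plus_INR. }
      assert (Hb := main_bound X n a y N Kn pr HyK ltac:(unfold N, Ln; lia)).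
      assert (Hp1 := Phi_bound1 delta P N X Hdelta HP Hsp HXP).
      fold S0 NX I in Hb, Hp1.
      rewrite HSN in Hb, Hp1. replace (INR Kn + INR Ln - INR Kn) with (INR Ln) in Hb by ring.
      assert (HK1 : 1 <= INR Kn) by (apply (le_INR 1); lia).
      assert (HKT : INR Kn <= T) by lra.
      assert (Hpoly : (INR Kn + INR Ln)^2 + 16/(68/10) * v^2 <= 493/100 * INR Ln * (INR Kn + v)) by nra.
      replace (16 / ((68/10) * delta ^ 2)) with (16/(68/10) * v^2) in Hp1 by (unfold v; field; lra).
      set (Phi := lsum X (fun x => lsum X (fun x' => Fej N (2*PI*(x-x'))))) in *.
      assert (HLpos : 0 < INR Ln) by lra.
      assert (Hq0 : Phi <= NX * (2*P+2) * (493/100 * (INR Kn + v)) * INR Ln).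
      { eapply Rle_trans; [exact Hp1|]. assert (0 <= NX * (2*P+2)) by nra.
        replace (NX * (2 * P + 2) * (493 / 100 * (INR Kn + v)) * INR Ln) with (NX * (2*P+2) * (493 / 100 * INR Ln * (INR Kn + v))) by ring.
        replace (NX * ((2 * P + 2) * ((INR Kn + INR Ln) ^ 2 + 16 / (68 / 10) * v ^ 2))) with (NX * (2*P+2) * ((INR Kn + INR Ln) ^ 2 + 16 / (68 / 10) * v ^ 2)) by ring.
        apply Rmult_le_compat_l; auto. }
      assert (Hq : Phi / INR Ln <= NX * (2*P+2) * (493/100 * (INR Kn + v))).
      { apply (Rmult_le_reg_r (INR Ln)); auto. replace (Phi / INR Ln * INR Ln) with Phi by (field; lra). exact Hq0. }
      assert (Hq2 : Phi / INR Ln <= PI ^ 2 * (NX * T + NX * v) * (P + 2)).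
      { eapply Rle_trans; [exact Hq|]. assert (HPI2 : PI^2 >= 9.869) by nra. assert (0 <= NX) by lra.
        assert (h1 : (2*P+2) * (493/100) <= PI^2 * (P+2)) by nra.
        assert (h2 : 0 <= INR Kn + v) by lra.
        assert (h3 : INR Kn + v <= T + v) by lra.
        replace (NX * (2 * P + 2) * (493 / 100 * (INR Kn + v))) with (NX * (INR Kn + v) * ((2*P+2) * (493/100))) by ring.
        replace (PI ^ 2 * (NX * T + NX * v) * (P + 2)) with (NX * (T + v) * (PI^2 * (P+2))) by ring.
        apply Rmult_le_compat; try nra. }
      eapply Rle_trans; [exact Hb|].
      replace (I / INR Ln * Phi) with (I * (Phi / INR Ln)) by (field; lra).
      replace (PI ^ 2 * (NX * T + NX * v) * (P + 2) * I) with (I * (PI ^ 2 * (NX * T + NX * v) * (P + 2))) by ring.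
      apply Rmult_le_compat_l; auto.
Qed.
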